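(* For $k\in\{0,1,\dots,N\}$ let $$\Delta_{\mathrm{bin}}(k)=\inf_{\tau\ge 0}\Big[k\int_{-\infty}^{\tau}(u-\tau)^2\phi(u)\,du+(N-k)\int_{\tau}^{\infty}(u-\tau)^2\phi(u)\,du\Big],\qquad \phi(u)=(2\pi)^{-1/2}e^{-u^2/2}.$$ Then (i) $\Delta_{\mathrm{bin}}(k)<N/2$ for all $0\le k<N/2$, and (ii) $\Delta_{\mathrm{bin}}(k)=N/2$ for all $N/2\le k\le N$. *)

(* Defs.v *)
From HB Require Import structures.
From mathcomp Require Import all_boot all_order all_algebra.
From mathcomp Require Import all_classical all_reals all_analysis.
Set Implicit Arguments. Unset Strict Implicit. Unset Printing Implicit Defensive.
Import Order.TTheory GRing.Theory Num.Theory.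
Local Open Scope classical_set_scope.
Local Open Scope ring_scope.

Definition phi {R : realType} (u : R) : R :=
  (Num.sqrt (2 * pi))^-1 * expR (- (u ^+ 2) / 2).

Definition bin_obj {R : realType} (N k : nat) (tau : R) : R :=
  k%:R * Rintegral lebesgue_measure `]-oo, tau] (fun u => (u - tau) ^+ 2 * phi u)
  + (N%:R - k%:R) * Rintegral lebesgue_measure `[tau, +oo[ (fun u => (u - tau) ^+ 2 * phi u).

Definition Delta_bin {R : realType} (N k : nat) : R :=
  inf [set bin_obj N k tau | tau in [set t : R | 0 <= t]].

(* Main.v *)
Require Import Defs.
From HB Require Import structures.
From mathcomp Require Import all_boot all_order all_algebra.
From mathcomp Require Import all_classical all_reals all_analysis.
From mathcomp Require Import ring lra.
From mathcomp Require Import measurable_realfun.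
Import Order.TTheory GRing.Theory Num.Theory.
Import numFieldNormedType.Exports.
Local Open Scope classical_set_scope.
Local Open Scope ring_scope.

Section S.
Context {R : realType}.
Notation mu := (@lebesgue_measure R).

Lemma phi_ge0 (u : R) : 0 <= phi u.
Proof. by rewrite /phi mulr_ge0 ?expR_ge0 // invr_ge0 sqrtr_ge0. Qed.

Lemma phi_gt0 (u : R) : 0 < phi u.
Proof. by rewrite /phi mulr_gt0 ?expR_gt0 // invr_gt0 sqrtr_gt0 mulr_gt0 ?pi_gt0. Qed.

Lemma phi_normal (u : R) : phi u = normal_pdf 0 1 u.
Proof.
rewrite /normal_pdf oner_eq0 /= /normal_peak /normal_fun /phi subr0 expr1n mul1r.
by rewrite -[pi *+ 2]mulr_natr [pi * _]mulrC.
Qed.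

Lemma dsq (x : R) : is_derive x 1 (fun u : R => - u ^+ 2 / 2) (- x).
Proof.
have -> : (fun u : R => - u ^+ 2 / 2) = (fun u => (- 2^-1) *: (u ^+ 2)).
  by apply/funext => u; rewrite /GRing.scale /=; ring.
apply: is_derive_eq.
by rewrite /GRing.scale /=; field.
Qed.

Definition cphi : R := (Num.sqrt (2 * pi))^-1.

Lemma dphi (x : R) : is_derive x 1 (@phi R) (- x * phi x).
Proof.
have -> : @phi R = (fun u => cphi *: (expR \o (fun u => - u^+2/2)) u).
  by apply/funext => u; rewrite /phi /GRing.scale.
have := dsq x => ?.
apply: is_derive_eq.
by rewrite /GRing.scale /=; ring.
Qed.

Lemma yexpR_le1 (y : R) : y * expR (- y) <= 1.
Proof.
have h1 : y <= expR y by rewrite (le_trans _ (expR_ge1Dx y)) // lerDr.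
have := ler_wpM2r (expR_ge0 (- y)) h1.
by rewrite -expRD subrr expR0.
Qed.

Lemma cphi_gt0 : 0 < cphi.
Proof. by rewrite invr_gt0 sqrtr_gt0 mulr_gt0 ?pi_gt0. Qed.

Lemma phiE (u : R) : phi u = cphi * expR (- u ^+ 2 / 2).
Proof. by []. Qed.

Lemma uphi_cvg : (fun u => u * phi u) x @[x --> +oo] --> (0:R).
Proof.
apply/cvgrPdist_le => e e0.
near=> u.
have u0 : 0 < u by near: u; apply: nbhs_pinfty_gt; rewrite num_real.
have uM : 2 * cphi / e <= u by near: u; apply: nbhs_pinfty_ge; rewrite num_real.
rewrite sub0r normrN ger0_norm; last by apply: mulr_ge0; [exact: ltW|exact: phi_ge0].
have key := yexpR_le1 (u ^+ 2 / 2).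
rewrite phiE mulNr.
set t := expR _ in key *.
have t0 : 0 < t by rewrite expR_gt0.
have cp := cphi_gt0.
have h3 : 2 * cphi <= e * u by move: uM; rewrite ler_pdivrMr // [u * _]mulrC.
have h2 : u ^+ 2 * t <= 2.
  have : u ^+ 2 / 2 * t * 2 <= 2 by rewrite ler_piMl.
  by rewrite mulrAC divfK.
rewrite -(ler_pM2r u0).
nra.
Unshelve. all: by end_near. Qed.

Lemma phi_cvg : phi x @[x --> +oo] --> (0:R).
Proof.
apply: (@squeeze_cvgr _ _ _ _ (fun=> 0) (fun u => u * phi u)).
- near=> u; rewrite phi_ge0 /=.
  have u1 : 1 <= u by near: u; apply: nbhs_pinfty_ge; rewrite num_real.
  by rewrite ler_peMl ?phi_ge0.
- exact: cvg_cst.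
- exact: uphi_cvg.
Unshelve. all: by end_near. Qed.

Lemma dG (x : R) : is_derive x 1 (fun u => u * phi u) ((1 - x ^+ 2) * phi x).
Proof.
have -> : (fun u => u * phi u) = (id * @phi R) by [].
have := dphi x => ?.
apply: is_derive_eq.
by rewrite /GRing.scale /=; ring.
Qed.

Lemma continuous_phi : continuous (@phi R).
Proof.
move=> x; have [+ _] := dphi x.
by move=> /derivable1_diffP/differentiable_continuous.
Qed.

Lemma continuous_G : continuous (fun u : R => u * phi u).
Proof.
move=> x; have [+ _] := dG x.
by move=> /derivable1_diffP/differentiable_continuous.
Qed.

Local Open Scope ereal_scope.

Lemma I1E : \int[mu]_(x in `[0%R, +oo[) (x * phi x)%:E = (phi 0)%:E.
Proof.
have dF (x : R) : is_derive x 1%R (fun u => - phi u)%R (x * phi x)%R.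
  have := dphi x => ?.
  have -> : (fun u => - phi u)%R = (- (@phi R))%R by [].
  by apply: is_derive_eq; rewrite mulNr opprK.
rewrite (@ge0_continuous_FTC2y _ (fun x => x * phi x)%R (fun u => - phi u)%R 0 0).
- by rewrite sub0e EFinN oppeK.
- by move=> x x0; rewrite mulr_ge0 ?phi_ge0.
- by apply: continuous_subspaceT; exact: continuous_G.
- by rewrite -oppr0; apply: cvgN; exact: phi_cvg.
- by move=> x _; have [] := dF x.
- apply: cvg_at_right_filter; apply: cvgN; exact: continuous_phi.
- by move=> x _; rewrite derive1E; have [_ ->] := dF x.
Qed.

Lemma mEF (g : R -> R) (D : set R) : continuous g ->
  measurable_fun D (EFin \o g).
Proof.
move=> cg; apply/measurable_EFinP; apply: measurable_funTS.
exact: continuous_measurable_fun.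
Qed.

Lemma splitT (g : R -> R) (c : R) : continuous g -> (forall x, (0 <= g x)%R) ->
  \int[mu]_x (g x)%:E = \int[mu]_(x in `]-oo, c]) (g x)%:E +
                         \int[mu]_(x in `[c, +oo[) (g x)%:E.
Proof.
move=> cg g0.
rewrite -(itv_setU_setT false c) ge0_integral_setU //=.
- by rewrite integral_itv_obnd_cbnd //; exact: mEF.
- exact: mEF.
- by move=> x _; rewrite lee_fin.
- apply/disj_setPS => x [] /=; rewrite !in_itv /= andbT => xc cx.
  by move: (lt_le_trans cx xc); rewrite ltxx.
Qed.

Lemma split01 (g : R -> R) : continuous g -> (forall x, (0 <= g x)%R) ->
  \int[mu]_(x in `[0%R, +oo[) (g x)%:E = \int[mu]_(x in `[0%R, 1%R]) (g x)%:E +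
                         \int[mu]_(x in `[1%R, +oo[) (g x)%:E.
Proof.
move=> cg g0.
rewrite (@itv_bndbnd_setU _ _ _ (BRight 1%R)) //= ?bnd_simp //.
rewrite ge0_integral_setU //=.
- by rewrite integral_itv_obnd_cbnd //; exact: mEF.
- exact: mEF.
- by move=> x _; rewrite lee_fin.
- apply/disj_setPS => x [] /=; rewrite !in_itv /= andbT => /andP[_ x1] x1'.
  by move: (lt_le_trans x1' x1); rewrite ltxx.
Qed.

Lemma cont_pphi (p : R -> R) : continuous p -> continuous (fun x => p x * phi x)%R.
Proof. by move=> cp x; apply: cvgM; [exact: cp|exact: continuous_phi]. Qed.

Lemma J1E : \int[mu]_(x in `[1%R, +oo[) (((x ^+ 2 - 1) * phi x)%R)%:E = (phi 1)%:E.
Proof.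
have dF (x : R) : is_derive x 1%R (fun u => - (u * phi u))%R ((x ^+ 2 - 1) * phi x)%R.
  have := dG x => ?.
  have -> : (fun u => - (u * phi u))%R = (- (fun u => u * phi u))%R by [].
  by apply: is_derive_eq; rewrite -mulNr opprB.
rewrite (@ge0_continuous_FTC2y _ _ (fun u => - (u * phi u))%R 1 0).
- by rewrite sub0e EFinN oppeK mul1r.
- move=> x x1; rewrite mulr_ge0 ?phi_ge0 // subr_ge0.
  nra.
- apply: continuous_subspaceT; apply: cont_pphi => x.
  by apply: cvgB; [exact: exprn_continuous|exact: cvg_cst].
- by rewrite -oppr0; apply: cvgN; exact: uphi_cvg.
- by move=> x _; have [] := dF x.
- apply: cvg_at_right_filter; apply: cvgN; exact: continuous_G.
- by move=> x _; rewrite derive1E; have [_ ->] := dF x.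
Qed.

Lemma J2E : \int[mu]_(x in `[0%R, 1%R]) (((1 - x ^+ 2) * phi x)%R)%:E = (phi 1)%:E.
Proof.
rewrite (@continuous_FTC2 _ _ (fun u => u * phi u)%R) //.
- by rewrite mul1r mul0r sube0.
- apply: continuous_subspaceT; apply: cont_pphi => x.
  by apply: cvgB; [exact: cvg_cst|exact: exprn_continuous].
- split.
  + by move=> x _; have [] := dG x.
  + by apply: cvg_at_right_filter; exact: continuous_G.
  + by apply: cvg_at_left_filter; exact: continuous_G.
- by move=> x _; rewrite derive1E; have [_ ->] := dG x.
Qed.

Lemma I2I0 : \int[mu]_(x in `[0%R, +oo[) ((x ^+ 2 * phi x)%R)%:E =
             \int[mu]_(x in `[0%R, +oo[) (phi x)%:E.
Proof.
have c2 : continuous (fun x : R => x ^+ 2 * phi x)%R.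
  by apply: cont_pphi => x; exact: exprn_continuous.
have p2 (x : R) : (0 <= x ^+ 2 * phi x)%R by rewrite mulr_ge0 ?sqr_ge0 ?phi_ge0.
rewrite (split01 _ c2 p2) (split01 _ continuous_phi phi_ge0).
have -> : \int[mu]_(x in `[1%R, +oo[) ((x ^+ 2 * phi x)%R)%:E =
   \int[mu]_(x in `[1%R, +oo[) ((((x ^+ 2 - 1) * phi x)%R)%:E + (phi x)%:E).
  by apply: eq_integral => x _; rewrite -EFinD mulrBl mul1r subrK.
rewrite ge0_integralD //=; first last.
- apply: mEF; exact: continuous_phi.
- by move=> x _; rewrite lee_fin phi_ge0.
- apply: mEF; apply: cont_pphi => x.
  by apply: cvgB; [exact: exprn_continuous|exact: cvg_cst].
- move=> x; rewrite /= in_itv /= andbT => x1; rewrite lee_fin mulr_ge0 ?phi_ge0 // subr_ge0.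
  nra.
rewrite J1E.
have -> : \int[mu]_(x in `[0%R, 1%R]) (phi x)%:E =
   \int[mu]_(x in `[0%R, 1%R]) ((((1 - x ^+ 2) * phi x)%R)%:E + ((x ^+ 2 * phi x)%R)%:E).
  by apply: eq_integral => x _; rewrite -EFinD mulrBl mul1r subrK.
rewrite ge0_integralD //=; first last.
- apply: mEF; exact: c2.
- by move=> x _; rewrite lee_fin.
- apply: mEF; apply: cont_pphi => x.
  by apply: cvgB; [exact: cvg_cst|exact: exprn_continuous].
- move=> x; rewrite /= in_itv /= => /andP[x0 x1]; rewrite lee_fin mulr_ge0 ?phi_ge0 // subr_ge0.
  nra.
rewrite J2E.
by rewrite addeA [X in X + _]addeC.
Qed.

Lemma half_eq (x : \bar R) : 0 <= x -> 2%:E * x = 1 -> x = (2^-1)%:E.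
Proof.
case: x => [r| |] //= _; last by rewrite mulry gtr0_sg // mul1e.
move=> /eqP; rewrite -EFinM eqe => /eqP h.
have h2 : (2:R)%R != 0%R by rewrite pnatr_eq0.
by rewrite -[r](mulKf h2) h mulr1.
Qed.

Lemma I0E : \int[mu]_(x in `[0%R, +oo[) (phi x)%:E = (2^-1)%:E.
Proof.
apply: half_eq; first by apply: integral_ge0 => x _; rewrite lee_fin phi_ge0.
have e1 : \int[mu]_x (phi x)%:E = 1.
  rewrite (_ : @phi R = normal_pdf 0 1); last by apply/funext => u; exact: phi_normal.
  exact: integral_normal_pdf.
rewrite -e1 ge0_symfun_integralT //.
- congr (_ * _); congr (integral _ _ _).
  by apply/seteqP; split => x /=; rewrite in_itv /= andbT.
- exact: phi_ge0.
- exact: continuous_phi.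
- by move=> x /=; rewrite /phi sqrrN.
Qed.

Definition hh (t u : R) : R := ((u - t) ^+ 2 * phi u)%R.

Lemma hh_ge0 t u : (0 <= hh t u)%R.
Proof. by rewrite /hh mulr_ge0 ?sqr_ge0 ?phi_ge0. Qed.

Lemma hh_cont t : continuous (hh t).
Proof.
apply: cont_pphi => x.
apply: (cvg_comp (fun x => x - t)%R (fun x => x ^+ 2)%R).
  by apply: (@cvgB _ R^o) => //; [exact: cvg_id|exact: cvg_cst].
exact: sqr_continuous.
Qed.

Lemma phiN (u : R) : phi (- u) = phi u.
Proof. by rewrite /phi sqrrN. Qed.

Lemma I2E : \int[mu]_(x in `[0%R, +oo[) ((x ^+ 2 * phi x)%R)%:E = (2^-1)%:E.
Proof. by rewrite I2I0 I0E. Qed.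

Lemma ABE t : \int[mu]_(x in `]-oo, t]) (hh t x)%:E +
              \int[mu]_(x in `[t, +oo[) (hh t x)%:E = ((1 + t ^+ 2)%R)%:E.
Proof.
rewrite -(splitT _ t (hh_cont t) (hh_ge0 t)) (splitT _ 0 (hh_cont t) (hh_ge0 t)).
have -> : \int[mu]_(x in `]-oo, 0%R]) (hh t x)%:E =
          \int[mu]_(x in `[0%R, +oo[) (hh (- t) x)%:E.
  have := @ge0_integration_by_substitutionNy R (hh t) 0.
  rewrite oppr0 => ->.
  - apply: eq_integral => x _ /=.
    by rewrite /hh phiN opprK -opprD sqrrN addrC.
  - exact: continuous_subspaceT (hh_cont t).
  - by move=> x _; exact: hh_ge0.
rewrite -ge0_integralD //=; first last.
- by apply: mEF; exact: hh_cont.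
- by move=> x _; rewrite lee_fin hh_ge0.
- by apply: mEF; exact: hh_cont.
- by move=> x _; rewrite lee_fin hh_ge0.
have -> : \int[mu]_(x in `[0%R, +oo[) ((hh (- t) x)%:E + (hh t x)%:E) =
  \int[mu]_(x in `[0%R, +oo[) (2%:E * ((x ^+ 2 * phi x)%R)%:E +
                                 ((2 * t ^+ 2)%R)%:E * (phi x)%:E).
  apply: eq_integral => x _; rewrite -!EFinM -EFinD /hh; congr EFin.
  ring.
have c2 : continuous (fun x : R => x ^+ 2 * phi x)%R.
  by apply: cont_pphi => x; exact: exprn_continuous.
rewrite ge0_integralD //=; first last.
- apply: emeasurable_funM => //; apply: mEF; exact: continuous_phi.
- by move=> x _; rewrite -EFinM lee_fin mulr_ge0 ?phi_ge0 // mulr_ge0 ?sqr_ge0.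
- apply: emeasurable_funM => //; apply: mEF; exact: c2.
- by move=> x _; rewrite -EFinM lee_fin mulr_ge0 // mulr_ge0 ?sqr_ge0 ?phi_ge0.
rewrite ge0_integralZl //=; last first.
  by move=> x _; rewrite lee_fin mulr_ge0 ?sqr_ge0 ?phi_ge0.
  by apply: mEF; exact: c2.
rewrite ge0_integralZl //=; last first.
  by rewrite lee_fin mulr_ge0 ?sqr_ge0.
  by move=> x _; rewrite lee_fin phi_ge0.
  by apply: mEF; exact: continuous_phi.
rewrite I2E I0E -!EFinM -EFinD; congr EFin.
by field.
Qed.

Lemma B0E : \int[mu]_(x in `[0%R, +oo[) (hh 0%R x)%:E = (2^-1)%:E.
Proof.
rewrite -I2E; apply: eq_integral => x _; by rewrite /hh subr0.
Qed.

Lemma fin_sum (x y : \bar R) (r : R) : 0 <= x -> 0 <= y -> x + y = r%:E ->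
  x = (fine x)%:E /\ y = (fine y)%:E /\ (fine x + fine y)%R = r.
Proof.
case: x => [a| |] //; case: y => [b| |] //= _ _.
by move=> h; split => //; split => //; move: h => /eqP; rewrite eqe => /eqP.
Qed.

Lemma A0E : \int[mu]_(x in `]-oo, 0%R]) (hh 0%R x)%:E = (2^-1)%:E.
Proof.
have := ABE 0%R; rewrite B0E => h.
have [] := fin_sum _ _ _ (integral_ge0 _ _) _ h.
- by move=> x _; rewrite lee_fin hh_ge0.
- by rewrite lee_fin.
move=> -> [_ h2]; congr EFin.
move: h2; rewrite expr0n /= addr0 => h2.
have -> : fine (\int[mu]_(x in `]-oo, 0%R]) (hh 0%R x)%:E) = (1 - 2^-1)%R by apply/eqP; rewrite eq_sym subr_eq h2.
by field.
Qed.

Lemma Age t : (0 <= t)%R -> (2^-1)%:E <= \int[mu]_(x in `]-oo, t]) (hh t x)%:E.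
Proof.
move=> t0; rewrite -A0E.
apply: (@le_trans _ _ (\int[mu]_(x in `]-oo, 0%R]) (hh t x)%:E)).
- apply: ge0_le_integral => //=.
  + by move=> x _; rewrite lee_fin hh_ge0.
  + by apply: mEF; exact: hh_cont.
  + by apply: mEF; exact: hh_cont.
  + move=> x; rewrite in_itv /= => x0; rewrite lee_fin /hh ler_wpM2r ?phi_ge0 //.
    nra.
- apply: ge0_subset_integral => //=.
  + by apply: mEF; exact: hh_cont.
  + by move=> x _; rewrite lee_fin hh_ge0.
  + by move=> x /=; rewrite !in_itv /= => /le_trans; apply.
Qed.

Lemma Ble t : (0 <= t)%R -> \int[mu]_(x in `[t, +oo[) (hh t x)%:E <=
   ((2^-1 + t ^+ 2 / 2 - 2 * t * phi 0)%R)%:E.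
Proof.
move=> t0.
apply: (@le_trans _ _ (\int[mu]_(x in `[0%R, +oo[) (hh t x)%:E)).
  apply: ge0_subset_integral => //=.
  + by apply: mEF; exact: hh_cont.
  + by move=> x _; rewrite lee_fin hh_ge0.
  + by move=> x /=; rewrite !in_itv /= !andbT; exact: le_trans.
have cG := continuous_G.
have e : \int[mu]_(x in `[0%R, +oo[) (hh t x)%:E + ((2 * t)%R)%:E * (phi 0)%:E =
         ((2^-1 + t ^+ 2 / 2)%R)%:E.
  rewrite -I1E -ge0_integralZl //=; first last.
  - by rewrite lee_fin mulr_ge0.
  - by move=> x; rewrite /= in_itv /= andbT => x0; rewrite lee_fin mulr_ge0 ?phi_ge0.
  - by apply: mEF; exact: cG.
  rewrite -ge0_integralD //=; first last.
  - by apply: emeasurable_funM => //; apply: mEF; exact: cG.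
  - by move=> x; rewrite /= in_itv /= andbT => x0; rewrite -EFinM lee_fin !mulr_ge0 ?phi_ge0.
  - by apply: mEF; exact: hh_cont.
  - by move=> x _; rewrite lee_fin hh_ge0.
  have c2 : continuous (fun x : R => x ^+ 2 * phi x)%R.
    by apply: cont_pphi => x; exact: exprn_continuous.
  have -> : \int[mu]_(x in `[0%R, +oo[) ((hh t x)%:E + (2 * t)%:E * (x * phi x)%:E) =
     \int[mu]_(x in `[0%R, +oo[) (((x ^+ 2 * phi x)%R)%:E + (t ^+ 2)%:E * (phi x)%:E).
    by apply: eq_integral => x _; rewrite -!EFinM -EFinD /hh; congr EFin; ring.
  rewrite ge0_integralD //=; first last.
  - apply: emeasurable_funM => //; apply: mEF; exact: continuous_phi.
  - by move=> x _; rewrite -EFinM lee_fin mulr_ge0 ?phi_ge0 ?sqr_ge0.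
  - by apply: mEF; exact: c2.
  - by move=> x _; rewrite lee_fin mulr_ge0 ?sqr_ge0 ?phi_ge0.
  rewrite ge0_integralZl //=; first last.
  - by rewrite lee_fin sqr_ge0.
  - by move=> x _; rewrite lee_fin phi_ge0.
  - by apply: mEF; exact: continuous_phi.
  by rewrite I2E I0E -EFinM -EFinD; congr EFin; field.
have : 0 <= \int[mu]_(x in `[0%R, +oo[) (hh t x)%:E.
  by apply: integral_ge0 => x _; rewrite lee_fin hh_ge0.
move: e; case: (\int[mu]_(x in _) _) => [r| |] //= + _.
rewrite -EFinM -EFinD => /eqP; rewrite eqe => /eqP <-.
by rewrite lee_fin addrK.
Qed.

Local Close Scope ereal_scope.

Definition aa t := fine (\int[mu]_(x in `]-oo, t]) (hh t x)%:E)%E.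
Definition bb t := fine (\int[mu]_(x in `[t, +oo[) (hh t x)%:E)%E.

Lemma abE t : [/\ aa t + bb t = 1 + t ^+ 2,
  (\int[mu]_(x in `]-oo, t]) (hh t x)%:E)%E = (aa t)%:E &
  (\int[mu]_(x in `[t, +oo[) (hh t x)%:E)%E = (bb t)%:E].
Proof.
have [] := fin_sum _ _ _ (integral_ge0 _ _) (integral_ge0 _ _) (ABE t).
- by move=> x _; rewrite lee_fin hh_ge0.
- by move=> x _; rewrite lee_fin hh_ge0.
by move=> h1 [h2 h3]; split.
Qed.

Lemma aa_ge t : 0 <= t -> 2^-1 <= aa t.
Proof. by move=> t0; have [_ h _] := abE t; rewrite -lee_fin -h Age. Qed.

Lemma bb_le t : 0 <= t -> bb t <= 2^-1 + t ^+ 2 / 2 - 2 * t * phi 0.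
Proof. by move=> t0; have [_ _ h] := abE t; rewrite -lee_fin -h Ble. Qed.

Lemma aa0 : aa 0 = 2^-1.
Proof. by rewrite /aa A0E. Qed.

Lemma bb0 : bb 0 = 2^-1.
Proof. by rewrite /bb B0E. Qed.

Lemma binE (N k : nat) t : bin_obj N k t = k%:R * aa t + (N%:R - k%:R) * bb t.
Proof. by []. Qed.

Lemma bb_ge0 t : 0 <= bb t.
Proof. by apply: fine_ge0; apply: integral_ge0 => x _; rewrite lee_fin hh_ge0. Qed.

Lemma aa_ge0 t : 0 <= aa t.
Proof. by apply: fine_ge0; apply: integral_ge0 => x _; rewrite lee_fin hh_ge0. Qed.

End S.

Theorem proposition2p8 (R : realType) (N : nat) :
  (forall k : nat, (k <= N)%N -> (k%:R < N%:R / 2 :> R) ->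
     Delta_bin N k < N%:R / 2 :> R) /\
  (forall k : nat, (k <= N)%N -> (N%:R / 2 <= k%:R :> R) ->
     Delta_bin N k = N%:R / 2 :> R).
Proof.
have kN (k : nat) : (k <= N)%N -> (k%:R <= N%:R :> R) by rewrite ler_nat.
have lb (k : nat) : (k <= N)%N ->
    has_lbound [set bin_obj N k tau | tau in [set t : R | 0 <= t]].
  move=> /kN hk; exists 0 => _ [t _ <-]; rewrite binE.
  by rewrite addr_ge0 // mulr_ge0 ?aa_ge0 ?bb_ge0 // subr_ge0.
split.
- move=> k hk hlt.
  have hk' := kN k hk.
  set c := phi (0 : R).
  have c0 : 0 < c by exact: phi_gt0.
  set D := N%:R - 2 * k%:R : R.
  have D0 : 0 < D by rewrite /D subr_gt0 -ltr_pdivlMl // mulrC.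
  have N0 : 0 < N%:R :> R.
    by move: D0; rewrite /D; have := ler0n R k; lra.
  set t := 2 * c * D / N%:R.
  have t0 : 0 < t by rewrite /t divr_gt0 // mulr_gt0 // mulr_gt0.
  have tN : t * N%:R = 2 * c * D by rewrite /t divfK // gt_eqF.
  apply: (@le_lt_trans _ _ (bin_obj N k t)).
    by apply: ge_inf; [exact: lb|exists t => //; exact: ltW].
  rewrite binE.
  have [hab _ _] := abE t.
  have hb := @bb_le R t (ltW t0).
  have hb0 := bb_ge0 t.
  rewrite -/c in hb.
  have e1 : k%:R * aa t + (N%:R - k%:R) * bb t = k%:R * (1 + t ^+ 2) + D * bb t.
    by rewrite -hab /D; ring.
  rewrite e1.
  have e2 : D * bb t <= D * (2^-1 + t ^+ 2 / 2 - 2 * t * c) by rewrite ler_pM2l.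
  apply: (le_lt_trans (_ : _ <= k%:R * (1 + t ^+ 2) + D * (2^-1 + t ^+ 2 / 2 - 2 * t * c))).
    by rewrite lerD2l.
  have p := mulr_gt0 (mulr_gt0 t0 c0) D0.
  have tN2 : t ^+ 2 * N%:R = t * (2 * c * D) by rewrite -tN; ring.
  move: tN2 p; rewrite /D => tN2 p.
  nra.
- move=> k hk hge.
  have hk' := kN k hk.
  apply/eqP; rewrite eq_le; apply/andP; split.
    apply: ge_inf; first exact: lb.
    exists 0; first by rewrite /=.
    by rewrite binE aa0 bb0; field.
  rewrite /Delta_bin; apply: lb_le_inf; first by exists (bin_obj N k 0); exists 0 => //=.
  move=> _ [t /= t0 <-]; rewrite binE.
  have [hab _ _] := abE t.
  have ha := @aa_ge R t t0.
  have e1 : k%:R * aa t + (N%:R - k%:R) * bb t =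
     (N%:R - k%:R) * (1 + t ^+ 2) + (2 * k%:R - N%:R) * aa t.
    by rewrite -hab; ring.
  rewrite e1.
  have h1 : (N%:R - k%:R) * 1 <= (N%:R - k%:R) * (1 + t ^+ 2 :> R).
    by rewrite ler_wpM2l ?subr_ge0 // lerDl sqr_ge0.
  have h2 : (2 * k%:R - N%:R) * 2^-1 <= (2 * k%:R - N%:R) * aa t :> R.
    by rewrite ler_wpM2l // subr_ge0 -ler_pdivrMl // mulrC.
  lra.
Qed.
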